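(* Let $d\in\mathbb{N}$. A probability distribution of an $\mathbb{N}^d$-valued random vector $(\tau_1,\ldots,\tau_d)$ satisfies the local discrete multivariate lack-of-memory property, i.e. for every $k\in\{1,\ldots,d\}$, all $1\le i_1,\ldots,i_k\le d$ and all $m,n_{i_1},\ldots,n_{i_k}\in\mathbb{N}_0$, $$\mathbb{P}(\tau_{i_1}>n_{i_1}+m,\ldots,\tau_{i_k}>n_{i_k}+m\mid \tau_{i_1}>m,\ldots,\tau_{i_k}>m)=\mathbb{P}(\tau_{i_1}>n_{i_1},\ldots,\tau_{i_k}>n_{i_k}),$$ if and only if it is a $d$-variate wide-sense geometric law $\mathcal{G}^{\mathcal W}(\tilde{\mathbf p})$ for some admissible parameters $\tilde{\mathbf p}$. In that case one can take $\tilde p_I=\mathbb{P}(\{\tau_i>1\ \forall i\notin I\}\cap\{\tau_i=1\ \forall i\in I\})$, $I\subseteq\{1,\ldots,d\}$.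
   Context: $\mathbb{N}=\{1,2,\ldots\}$, $\mathbb{N}_0=\{0\}\cup\mathbb{N}$. Wide-sense geometric law $\mathcal{G}^{\mathcal W}(\tilde{\mathbf p})$: given parameters $\tilde p_I\in[0,1]$, $I\subseteq\{1,\ldots,d\}$ (including $I=\emptyset$), with $\sum_I\tilde p_I=1$ and $\sum_{I:k\notin I}\tilde p_I<1$ for each $k=1,\ldots,d$, run i.i.d. trials of an experiment whose outcome is the set $I$ with probability $\tilde p_I$; let $\tilde E_I$ be the index of the first trial with outcome $I$, and set $\tau_k:=\min\{\tilde E_I: k\in I\}$; the law of $(\tau_1,\ldots,\tau_d)$ is $\mathcal{G}^{\mathcal W}(\tilde{\mathbf p})$. *)

(* Defs.v *)
From Stdlib Require Import Reals ClassicalEpsilon.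
From mathcomp Require Import all_boot.

Set Implicit Arguments.
Unset Strict Implicit.
Unset Printing Implicit Defensive.
Local Open Scope R_scope.

(* Points of N^d: coordinate i (i : 'I_d, standing for i+1 in {1..d}).
   A discrete law on N^d is given by its probability mass function
   f : ('I_d -> nat) -> R, which vanishes outside N^d = {1,2,...}^d. *)
Definition pt (d : nat) := 'I_d -> nat.

Definition shift (d N : nat) (x : {ffun 'I_d -> 'I_N}) : pt d :=
  fun i => (nat_of_ord (x i)).+1.

Definition box_sum (d : nat) (f : pt d -> R) (A : pt d -> bool) (N : nat) : R :=
  \big[Rplus/R0]_(x : {ffun 'I_d -> 'I_N})
     (if A (shift x) then f (shift x) else R0).

(* P(A) := sum_{x in N^d, x in A} f x, the limit of the box sums. *)
Definition prob (d : nat) (f : pt d -> R) (A : pt d -> bool) : R :=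
  proj1_sig (constructive_indefinite_description
    (fun r => (exists l, Un_cv (box_sum f A) l) -> Un_cv (box_sum f A) r)
    (match classic (exists l, Un_cv (box_sum f A) l) with
     | or_introl H => let (l, Hl) := H in ex_intro _ l (fun _ => Hl)
     | or_intror H => ex_intro _ R0 (fun H' => False_ind _ (H H'))
     end)).

Definition is_pmf (d : nat) (f : pt d -> R) : Prop :=
  (forall x, Rle 0 (f x)) /\
  (forall x : pt d, (exists i, x i = 0%N) -> f x = R0) /\
  Un_cv (box_sum f (fun _ => true)) R1.

Definition local_LMP (d : nat) (f : pt d -> R) : Prop :=
  forall (k : nat), (1 <= k <= d)%N ->
  forall (i : 'I_k -> 'I_d) (m : nat) (n : 'I_k -> nat),
    let A := fun x : pt d => [forall j : 'I_k, (n j + m < x (i j))%N] in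
    let B := fun x : pt d => [forall j : 'I_k, (m < x (i j))%N] in
    let C := fun x : pt d => [forall j : 'I_k, (n j < x (i j))%N] in
    (0 < prob f B) ->
    (prob f (fun x => A x && B x) / prob f B) = prob f C.

Definition wsg_admissible (d : nat) (p : {set 'I_d} -> R) : Prop :=
  (forall I, 0 <= p I <= 1) /\
  \big[Rplus/R0]_(I : {set 'I_d}) p I = R1 /\
  (forall k : 'I_d, (\big[Rplus/R0]_(I : {set 'I_d} | k \notin I) p I < 1)).

(* Outcomes w of the first M trials: trial t+1 has outcome w t.
   first_hit w k = tilde-tau_k on these trials = index of the first trial
   whose outcome contains k, or M+1 if none of the first M trials does. *)
Definition first_hit (d M : nat) (w : {ffun 'I_M -> {set 'I_d}}) (k : 'I_d) : nat :=
  (find (fun I : {set 'I_d} => k \in I) [seq w t | t <- enum 'I_M]).+1.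

(* The pmf of G^W(p): P(tau = x) is the probability (under the i.i.d.
   product law of the trials) that the first M := max_k x_k trials produce
   first hits exactly x; the event {tau = x} only depends on these trials. *)
Definition wsg_pmf (d : nat) (p : {set 'I_d} -> R) (x : pt d) : R :=
  let M := (\max_(i : 'I_d) x i)%N in
  \big[Rplus/R0]_(w : {ffun 'I_M -> {set 'I_d}})
     (if [forall k : 'I_d, first_hit w k == x k]
      then \big[Rmult/R1]_(t : 'I_M) p (w t) else R0).

Definition wsg_param_of (d : nat) (f : pt d -> R) (I : {set 'I_d}) : R :=
  prob f (fun x => [forall i : 'I_d, if i \in I then x i == 1%N else (1 < x i)%N]).

(* Main.v *)
From HB Require Import structures.
Require Import Defs.
From Stdlib Require Import Reals Lra FunctionalExtensionality ClassicalEpsilon Classical.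
From mathcomp Require Import all_boot zify.
Set Implicit Arguments. Unset Strict Implicit. Unset Printing Implicit Defensive.
Set Warnings "-notation-overridden -redundant-canonical-projection".
Local Open Scope R_scope.
HB.instance Definition _ := Monoid.isComLaw.Build R R0 Rplus
  (fun a b c => esym (Rplus_assoc a b c)) Rplus_comm Rplus_0_l.
HB.instance Definition _ := Monoid.isComLaw.Build R R1 Rmult
  (fun a b c => esym (Rmult_assoc a b c)) Rmult_comm Rmult_1_l.
HB.instance Definition _ := Monoid.isMulLaw.Build R R0 Rmult Rmult_0_l Rmult_0_r.
HB.instance Definition _ := Monoid.isAddLaw.Build R Rmult Rplus Rmult_plus_distr_r Rmult_plus_distr_l.
Lemma sum_ge0 (I : Type) (r : seq I) (P : pred I) (F : I -> R) :
  (forall i, P i -> 0 <= F i) -> 0 <= \big[Rplus/R0]_(i <- r | P i) F i.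
Proof. move=> H; apply: (big_ind (fun v => 0 <= v)); [lra | move=> *; lra | exact: H]. Qed.

Lemma sum_le (I : Type) (r : seq I) (P : pred I) (F G : I -> R) :
  (forall i, P i -> F i <= G i) ->
  \big[Rplus/R0]_(i <- r | P i) F i <= \big[Rplus/R0]_(i <- r | P i) G i.
Proof. move=> H; apply: (big_ind2 (fun a b => a <= b)); [lra | move=> *; lra | exact: H]. Qed.

Lemma prod_ind (I : finType) (P : pred I) :
  \big[Rmult/R1]_(i : I) (if P i then 1 else 0) = if [forall i, P i] then 1 else 0.
Proof.
case: forallP => [H|H].
  by apply: big1 => i _; rewrite H.
have [i0 Hi0] : exists i, ~~ P i.
  apply: NNPP => Hn; apply: H => i; apply: NNPP => Hi; apply: Hn; exists i; exact/negP.
by rewrite (bigD1 i0) //= (negbTE Hi0) Rmult_0_l.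
Qed.

Lemma cv_const (c : R) : Un_cv (fun _ => c) c.
Proof. move=> e He; exists 0%nat => n _; rewrite /R_dist Rminus_diag Rabs_R0; lra. Qed.

Lemma sum_cv (I : Type) (r : seq I) (c : I -> R) (u : I -> nat -> R) (l : I -> R) :
  (forall s, Un_cv (u s) (l s)) ->
  Un_cv (fun N => \big[Rplus/R0]_(s <- r) (c s * u s N)) (\big[Rplus/R0]_(s <- r) (c s * l s)).
Proof.
move=> H; elim: r => [|s r IH].
  rewrite big_nil; apply: (Un_cv_ext (fun _ => 0)); [by move=> N; rewrite big_nil | exact: cv_const].
rewrite big_cons; apply: (Un_cv_ext (fun N => c s * u s N + \big[Rplus/R0]_(s0 <- r) (c s0 * u s0 N))).
  by move=> N; rewrite big_cons.
apply: CV_plus => //; apply: CV_mult => //; exact: cv_const.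
Qed.
Definition ib (b : bool) : R := if b then 1 else 0.
Lemma ibE (b : bool) (a : R) : (if b then a else R0) = a * ib b.
Proof. by case: b; rewrite /ib /=; ring. Qed.

Definition pos d (x : pt d) := forall j, (0 < x j)%N.
Lemma shift_pos d N x : pos (@shift d N x).
Proof. by move=> j; rewrite /shift. Qed.

Lemma box_ext d (f : pt d -> R) (A B : pt d -> bool) :
  (forall x, pos x -> A x = B x) -> box_sum f A = box_sum f B.
Proof.
move=> H; apply: functional_extensionality => N; apply: eq_bigr => x _.
by rewrite H //; exact: shift_pos.
Qed.

Lemma box_le d (f : pt d -> R) (A B : pt d -> bool) N :
  (forall x, 0 <= f x) -> (forall x, pos x -> A x -> B x) -> box_sum f A N <= box_sum f B N.
Proof.
move=> f0 H; apply: sum_le => x _; case: ifP => HA.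
  rewrite (H _ (shift_pos x) HA); lra.
case: (B _); [apply: f0 | lra].
Qed.

Lemma box_ge0 d (f : pt d -> R) (A : pt d -> bool) N :
  (forall x, 0 <= f x) -> 0 <= box_sum f A N.
Proof. move=> f0; apply: sum_ge0 => x _; case: ifP => _; [apply: f0 | lra]. Qed.

Lemma box_grow d (f : pt d -> R) A : (forall x, 0 <= f x) -> Un_growing (box_sum f A).
Proof.
move=> f0 N; rewrite /box_sum.
pose phi := fun (x : {ffun 'I_d -> 'I_N}) =>
  ([ffun j => widen_ord (leqnSn N) (x j)] : {ffun 'I_d -> 'I_N.+1}).
have sh : forall x, shift (phi x) = shift x.
  by move=> x; apply: functional_extensionality => j; rewrite /shift ffunE.
have inj : injective phi.
  move=> x y /ffunP H; apply/ffunP => j; have := H j; rewrite !ffunE => /(congr1 val) /= E.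
  exact: val_inj.
rewrite (bigID (fun y => y \in [set phi x | x in [set: {ffun 'I_d -> 'I_N}]])) /=.
rewrite big_imset /=; last by move=> x y _ _; apply: inj.
have -> : \big[Rplus/R0]_(x in [set: {ffun 'I_d -> 'I_N}])
      (if A (shift (phi x)) then f (shift (phi x)) else R0) =
    \big[Rplus/R0]_(x : {ffun 'I_d -> 'I_N}) (if A (shift x) then f (shift x) else R0).
  by apply: eq_big => [x|x _]; rewrite ?inE ?sh.
have : 0 <= \big[Rplus/R0]_(i | i \notin [set phi x | x in [set: {ffun 'I_d -> 'I_N}]])
         (if A (shift i) then f (shift i) else R0).
  apply: sum_ge0 => x _; case: ifP => _; [apply: f0 | lra].
move=> Hge; apply: Rle_trans (Rplus_le_compat_l _ _ _ Hge); rewrite Rplus_0_r; exact: Rle_refl.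
Qed.

Lemma cv_box d (f : pt d -> R) A : is_pmf f -> Un_cv (box_sum f A) (prob f A).
Proof.
move=> [f0 [fz ft]].
have bnd : forall N, box_sum f A N <= 1.
  move=> N; apply: Rle_trans (box_le (B := fun _ => true) N f0 (fun x _ _ => isT)) _.
  exact: growing_ineq (box_grow _ f0) ft N.
have [l Hl] : {l | Un_cv (box_sum f A) l}.
  apply: growing_cv; first exact: box_grow.
  by exists 1 => x [i ->].
rewrite /prob; case: constructive_indefinite_description => r Hr /=; apply: Hr; by exists l.
Qed.

Section Prob.
Variables (d : nat) (f : pt d -> R) (hf : is_pmf f).
Let f0 : forall x, 0 <= f x. Proof. by case: hf. Qed.

Lemma prob_ext (A B : pt d -> bool) : (forall x, pos x -> A x = B x) -> prob f A = prob f B.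
Proof.
move=> H; eapply UL_sequence; first exact: (cv_box A hf); rewrite (box_ext f H); exact: cv_box.
Qed.

Lemma prob_box A N : box_sum f A N <= prob f A.
Proof. exact: growing_ineq (box_grow _ f0) (cv_box A hf) N. Qed.

Lemma prob_mono (A B : pt d -> bool) : (forall x, pos x -> A x -> B x) -> prob f A <= prob f B.
Proof. move=> H; apply: Rle_cv_lim (cv_box A hf) (cv_box B hf) => N; exact: box_le. Qed.

Lemma prob_ge0 A : 0 <= prob f A.
Proof. apply: Rle_trans (prob_box A 0); exact: box_ge0. Qed.

Lemma prob_true : prob f (fun _ => true) = 1.
Proof. eapply UL_sequence; first exact: (cv_box _ hf); by case: hf => _ []. Qed.

Lemma prob_le1 A : prob f A <= 1.
Proof. rewrite -prob_true; exact: prob_mono. Qed.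

Lemma box_lin (S : finType) (c : S -> R) (E : S -> pt d -> bool) (A : pt d -> bool) N :
  (forall y, pos y -> ib (A y) = \big[Rplus/R0]_(s : S) (c s * ib (E s y))) ->
  box_sum f A N = \big[Rplus/R0]_(s : S) (c s * box_sum f (E s) N).
Proof.
move=> H; rewrite /box_sum.
under [in RHS]eq_bigr do rewrite big_distrr /=.
rewrite exchange_big /=; apply: eq_bigr => x _.
rewrite ibE (H _ (shift_pos x)) big_distrr /=; apply: eq_bigr => s _; rewrite ibE; ring.
Qed.

Lemma prob_lin (S : finType) (c : S -> R) (E : S -> pt d -> bool) (A : pt d -> bool) :
  (forall y, pos y -> ib (A y) = \big[Rplus/R0]_(s : S) (c s * ib (E s y))) ->
  prob f A = \big[Rplus/R0]_(s : S) (c s * prob f (E s)).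
Proof.
move=> H; eapply UL_sequence; first exact: (cv_box A hf).
apply: (Un_cv_ext (fun N => \big[Rplus/R0]_(s : S) (c s * box_sum f (E s) N))).
  by move=> N; rewrite (box_lin N H).
apply: sum_cv => s; exact: cv_box.
Qed.
End Prob.
Lemma ib_forall (I : finType) (P : pred I) :
  \big[Rmult/R1]_(i : I) ib (P i) = ib [forall i, P i].
Proof. exact: prod_ind. Qed.

Definition sgn d (phi : {ffun 'I_d -> bool}) : R :=
  \big[Rmult/R1]_i (if phi i then -1 else 1).
Definition cvec d (x : pt d) (phi : {ffun 'I_d -> bool}) : pt d :=
  fun i => ((x i).-1 + phi i)%N.

Lemma ie d (x y : pt d) : pos x ->
  ib [forall j, y j == x j] =
  \big[Rplus/R0]_(phi : {ffun 'I_d -> bool}) (sgn phi * ib [forall j, (cvec x phi j < y j)%N]).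
Proof.
move=> px; rewrite -ib_forall.
have step : forall j, ib (y j == x j) =
    \big[Rplus/R0]_(b : bool) ((if b then -1 else 1) * ib ((x j).-1 + b < y j)%N).
  move=> j; rewrite big_bool /=; have := px j.
  case: (x j) => // xj _ /=; rewrite addn1 addn0 /ib.
  by case: eqP => e1; case: ltnP => e2; case: ltnP => e3; (by exfalso; lia) || lra.
rewrite (eq_bigr _ (fun j _ => step j)) bigA_distr_bigA /=.
apply: eq_bigr => phi _; rewrite big_split /= ib_forall; done.
Qed.
Lemma fh_lt d M (w : {ffun 'I_M -> {set 'I_d}}) (j : 'I_d) c : (c <= M)%N ->
  (c < first_hit w j)%N = [forall t : 'I_M, (t < c)%N ==> (j \notin w t)].
Proof.
move=> cM; rewrite /first_hit ltnS.
set s := [seq w t | t <- enum 'I_M].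
have ss : size s = M by rewrite size_map size_enum_ord.
have nths : forall t : 'I_M, nth set0 s t = w t.
  by move=> t; rewrite (nth_map t) ?size_enum_ord // nth_ord_enum.
apply/idP/forallP => [H t | H].
  apply/implyP => tc; have := @before_find _ set0 (fun I : {set 'I_d} => j \in I) s t.
  by rewrite nths => ->//; exact: leq_trans tc H.
rewrite leqNgt; apply/negP => hlt.
have hs : (find (fun I : {set 'I_d} => j \in I) s < M)%N by exact: leq_trans hlt cM.
have := @nth_find _ set0 (fun I : {set 'I_d} => j \in I) s.
rewrite has_find ss hs => /(_ isT).
have := nths (Ordinal hs) => /= ->.
by have := H (Ordinal hs) => /= /implyP /(_ hlt) /negbTE ->.
Qed.

Lemma fh_pos d M (w : {ffun 'I_M -> {set 'I_d}}) (j : 'I_d) : (0 < first_hit w j)%N.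
Proof. by []. Qed.

Lemma fh_le d M (w : {ffun 'I_M -> {set 'I_d}}) (j : 'I_d) : (first_hit w j <= M.+1)%N.
Proof. by rewrite /first_hit ltnS; apply: leq_trans (find_size _ _) _; rewrite size_map size_enum_ord. Qed.

Lemma fact M d (p : {set 'I_d} -> R) (Q : 'I_M -> pred {set 'I_d}) :
  \big[Rplus/R0]_(w : {ffun 'I_M -> {set 'I_d}})
     (if [forall t, Q t (w t)] then \big[Rmult/R1]_t p (w t) else R0)
  = \big[Rmult/R1]_t \big[Rplus/R0]_(I : {set 'I_d}) (if Q t I then p I else R0).
Proof.
rewrite bigA_distr_bigA /=; apply: eq_bigr => w _.
rewrite ibE -ib_forall -big_split /=; apply: eq_bigr => t _; rewrite ibE; ring.
Qed.

Definition gp d (p : {set 'I_d} -> R) k (i : 'I_k -> 'I_d) (n : 'I_k -> nat) (t : nat) : R :=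
  \big[Rplus/R0]_(I : {set 'I_d}) (if [forall j, (t < n j)%N ==> (i j \notin I)] then p I else R0).

Definition Ev d k (i : 'I_k -> 'I_d) (n : 'I_k -> nat) : pt d -> bool :=
  fun x => [forall j, (n j < x (i j))%N].

Lemma fh_ev d M k (p : {set 'I_d} -> R) (i : 'I_k -> 'I_d) (n : 'I_k -> nat) :
  (forall j, n j <= M)%N ->
  \big[Rplus/R0]_(w : {ffun 'I_M -> {set 'I_d}})
     (if Ev i n (first_hit w) then \big[Rmult/R1]_t p (w t) else R0)
  = \big[Rmult/R1]_(0 <= t < M) gp p i n t.
Proof.
move=> nM; rewrite big_mkord /gp -(fact p (fun (t : 'I_M) I => [forall j, (t < n j)%N ==> (i j \notin I)])).
apply: eq_bigr => w _; congr (if _ then _ else _); rewrite /Ev.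
apply/forallP/forallP => H.
  move=> t; apply/forallP => j; have := H j; rewrite fh_lt // => /forallP /(_ t) //.
move=> j; rewrite fh_lt //; apply/forallP => t; have := H t => /forallP /(_ j) //.
Qed.
Definition Lp d (p : {set 'I_d} -> R) k (i : 'I_k -> 'I_d) (n : 'I_k -> nat) : R :=
  \big[Rmult/R1]_(0 <= t < \max_(j : 'I_k) n j) gp p i n t.

Section GP.
Variables (d : nat) (p : {set 'I_d} -> R) (p1 : \big[Rplus/R0]_I p I = 1).

Lemma gp_big k (i : 'I_k -> 'I_d) n t : (forall j, n j <= t)%N -> gp p i n t = 1.
Proof.
move=> H; rewrite /gp -p1; apply: eq_bigr => I _; rewrite ifT //.
apply/forallP => j; apply/implyP => h; have := H j; lia.
Qed.

Lemma Lp_K k (i : 'I_k -> 'I_d) n K : (forall j, n j <= K)%N ->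
  \big[Rmult/R1]_(0 <= t < K) gp p i n t = Lp p i n.
Proof.
move=> H; rewrite /Lp; set mx := \max_(j : 'I_k) n j.
have mK : (mx <= K)%N by apply/bigmax_leqP => j _; exact: H.
rewrite (big_cat_nat (leq0n mx) mK) /= [X in _ * X = _]big1_seq ?Rmult_1_r // => t /andP [_].
rewrite mem_index_iota => /andP [ht _]; apply: gp_big => j; apply: leq_trans ht.
exact: leq_bigmax.
Qed.

Lemma gp_ext k (i : 'I_k -> 'I_d) n n' t t' :
  (forall j, (t < n j)%N = (t' < n' j)%N) -> gp p i n t = gp p i n' t'.
Proof.
move=> H; rewrite /gp; apply: eq_bigr => I _; congr (if _ then _ else _).
by apply: eq_forallb => j; rewrite H.
Qed.

Lemma Lp_shift k (i : 'I_k -> 'I_d) n m :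
  Lp p i (fun j => n j + m)%N = Lp p i (fun _ => m) * Lp p i n.
Proof.
set mx := \max_(j : 'I_k) n j.
have hn : forall j, (n j <= mx)%N by move=> j; exact: leq_bigmax.
rewrite -(@Lp_K k i (fun j => n j + m)%N (mx + m)); last by move=> j; rewrite leq_add2r.
rewrite -(@Lp_K k i (fun _ => m) m) // -(@Lp_K k i n mx) //.
rewrite (big_cat_nat (leq0n m) (leq_addl mx m)) /=.
congr (_ * _).
  apply: eq_big_nat => t /andP [_ ht]; apply: gp_ext => j.
  apply/idP/idP => _ //; lia.
rewrite -{1}(add0n m) big_addn addnK; apply: eq_big_nat => t _; apply: gp_ext => j.
by rewrite ltn_add2r.
Qed.
End GP.
Section WSG.
Variables (d : nat) (p : {set 'I_d} -> R) (p1 : \big[Rplus/R0]_I p I = 1).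

Lemma wsg_ie N (y : pt d) : pos y -> (forall j, y j <= N)%N ->
  \big[Rplus/R0]_(w : {ffun 'I_N -> {set 'I_d}})
     (if [forall j, first_hit w j == y j] then \big[Rmult/R1]_t p (w t) else R0)
  = \big[Rplus/R0]_(phi : {ffun 'I_d -> bool}) (sgn phi * Lp p (fun j => j) (cvec y phi)).
Proof.
move=> py yN.
under eq_bigr => w _ do rewrite ibE (@ie d y (first_hit w) py) big_distrr /=.
rewrite exchange_big /=; apply: eq_bigr => phi _.
have cN : forall j, (cvec y phi j <= N)%N.
  move=> j; rewrite /cvec; have := yN j; have := py j; case: (phi j) => /=; lia.
rewrite -(@Lp_K d p p1 d (fun j => j) (cvec y phi) N) // -(fh_ev p (fun j => j) cN) big_distrr /=.
apply: eq_bigr => w _; rewrite ibE /Ev -!Rmult_assoc [X in X * _ = _]Rmult_comm; exact: erefl.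
Qed.

Lemma wsg_pmf_eq (y : pt d) : pos y ->
  wsg_pmf p y = \big[Rplus/R0]_(phi : {ffun 'I_d -> bool}) (sgn phi * Lp p (fun j => j) (cvec y phi)).
Proof. move=> py; rewrite /wsg_pmf; apply: wsg_ie => // j; exact: leq_bigmax. Qed.
End WSG.
Lemma sing d N (y : pt d) (G : pt d -> R) :
  \big[Rplus/R0]_(x : {ffun 'I_d -> 'I_N}) (if [forall j, y j == shift x j] then G (shift x) else R0)
  = if [forall j, (0 < y j)%N && (y j <= N)%N] then G y else R0.
Proof.
case: forallP => H.
  have H' : forall j, ((y j).-1 < N)%N by move=> j; have /andP [a b] := H j; lia.
  pose x0 : {ffun 'I_d -> 'I_N} := [ffun j => Ordinal (H' j)].
  have sx : shift x0 = y.
    apply: functional_extensionality => j; rewrite /shift ffunE /=.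
    have /andP[a _] := H j; lia.
  rewrite (bigD1 x0) //= sx.
  have -> : [forall j, y j == y j] by apply/forallP.
  rewrite big1 ?Rplus_0_r // => x hx; rewrite ifF //; apply/negP => /forallP E.
  move/eqP: hx; apply; apply/ffunP => j; apply: val_inj; rewrite ffunE /=.
  by have := E j; rewrite /shift => /eqP ->.
rewrite big1 // => x _; rewrite ifF //; apply/negP => /forallP E; apply: H => j.
by have := E j; rewrite /shift => /eqP ->; rewrite ltn_ord.
Qed.

Lemma ineq4 (a : R) (e b : bool) : 0 <= a ->
  (if e then a else R0) + (if true && b then a else R0) <= a + (if e && b then a else R0).
Proof. case: e; case: b => /=; lra. Qed.

Section DirB.
Variables (d : nat) (p : {set 'I_d} -> R) (p1 : \big[Rplus/R0]_I p I = 1)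
  (p0 : forall I, 0 <= p I) (f : pt d -> R) (hf : is_pmf f) (hfw : forall x, f x = wsg_pmf p x).

Lemma box_wsg (A : pt d -> bool) N : box_sum f A N =
  \big[Rplus/R0]_(w : {ffun 'I_N -> {set 'I_d}})
    (if A (first_hit w) && [forall j, first_hit w j <= N]%N then \big[Rmult/R1]_t p (w t) else R0).
Proof.
rewrite /box_sum.
transitivity (\big[Rplus/R0]_(x : {ffun 'I_d -> 'I_N}) \big[Rplus/R0]_(w : {ffun 'I_N -> {set 'I_d}})
   (if [forall j, first_hit w j == shift x j] then
      (if A (shift x) then \big[Rmult/R1]_t p (w t) else R0) else R0)).
  apply: eq_bigr => x _; case: ifP => hA.
    rewrite hfw (wsg_pmf_eq p1 (shift_pos x)) -(@wsg_ie d p p1 N (shift x) (shift_pos x)); last first.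
      by move=> j; rewrite /shift ltn_ord.
    by [] || (apply: eq_bigr => w _; rewrite ?hA).
  by rewrite big1 // => w _; case: ifP.
rewrite exchange_big; apply: eq_bigr => w _.
rewrite (@sing d N (first_hit w) (fun z => if A z then \big[Rmult/R1]_t p (w t) else R0)).
case: (A _); rewrite ?andbF ?andFb /=; last by case: ifP.
congr (if _ then _ else _); apply: eq_forallb => j; by rewrite fh_pos.
Qed.

Lemma sum_all N : \big[Rplus/R0]_(w : {ffun 'I_N -> {set 'I_d}}) \big[Rmult/R1]_t p (w t) = 1.
Proof.
have := fact p (fun (_ : 'I_N) (_ : {set 'I_d}) => true).
have -> : \big[Rmult/R1]_(t < N) \big[Rplus/R0]_(I : {set 'I_d}) (if true then p I else R0) = 1.
  by rewrite big1 // => t _; exact: p1.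
move=> <-; apply: eq_bigr => w _; rewrite (_ : [forall t : 'I_N, true] = true) //; exact/forallP.
Qed.

Lemma prob_wsg k (i : 'I_k -> 'I_d) n : prob f (Ev i n) = Lp p i n.
Proof.
set K0 := \max_(j : 'I_k) n j.
have nK : forall N, (K0 <= N)%N -> forall j, (n j <= N)%N.
  move=> N h j; apply: leq_trans h; exact: leq_bigmax.
have a0 : forall N (w : {ffun 'I_N -> {set 'I_d}}), 0 <= \big[Rmult/R1]_t p (w t).
  move=> N w; apply: (big_ind (fun v => 0 <= v)); [lra | move=> *; apply: Rmult_le_pos => // | move=> *; exact: p0].
have up : forall N, (K0 <= N)%N -> box_sum f (Ev i n) N <= Lp p i n.
  move=> N h; rewrite box_wsg -(@Lp_K d p p1 k i n N (nK N h)) -(@fh_ev d N k p i n (nK N h)).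
  apply: sum_le => w _; case: (Ev _ _ _) => /=; last lra.
  case: ifP => _; [exact: Rle_refl | exact: a0].
have lo : forall N, (K0 <= N)%N -> Lp p i n + box_sum f (fun _ => true) N <= 1 + box_sum f (Ev i n) N.
  move=> N h; rewrite !box_wsg -(@Lp_K d p p1 k i n N (nK N h)) -(@fh_ev d N k p i n (nK N h)) -(sum_all N) -!big_split /=.
  apply: sum_le => w _; apply: ineq4; exact: a0.
have cvt := proj2 (proj2 hf).
eapply UL_sequence; first exact: (cv_box (Ev i n) hf).
move=> e he; have [N0 HN0] := cvt e he; exists (maxn N0 K0) => N /leP hN.
have h1 : (N0 <= N)%N by apply: leq_trans hN; exact: leq_maxl.
have h2 : (K0 <= N)%N by apply: leq_trans hN; exact: leq_maxr.
have := HN0 N (elimT leP h1); have := up N h2; have := lo N h2.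
have := growing_ineq _ _ (box_grow xpredT (proj1 hf)) cvt N.
rewrite /R_dist => H1 H2 H3 H4; move: H4; split_Rabs; lra.
Qed.
End DirB.
Lemma Ev_shift d k (i : 'I_k -> 'I_d) n m :
  (fun x => [forall j, (n j + m < x (i j))%N] && [forall j, (m < x (i j))%N]) =
  Ev i (fun j => n j + m)%N.
Proof.
apply: functional_extensionality => x; rewrite /Ev.
apply/andP/forallP => [[/forallP H _] j | H]; first exact: H.
by split; apply/forallP => j; have := H j; [done | lia].
Qed.

Lemma lmp_iff d (f : pt d -> R) : local_LMP f <->
  (forall k, (1 <= k <= d)%N -> forall (i : 'I_k -> 'I_d) m n,
    0 < prob f (Ev i (fun _ => m)) ->
    prob f (Ev i (fun j => n j + m)%N) / prob f (Ev i (fun _ => m)) = prob f (Ev i n)).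
Proof.
split=> H k hk i m n.
  by have := H k hk i m n; rewrite -Ev_shift; apply.
by have := H k hk i m n; rewrite -Ev_shift; apply.
Qed.

Lemma dirB d (p : {set 'I_d} -> R) (hp : wsg_admissible p) (f : pt d -> R) (hf : is_pmf f)
  (hfw : forall x, f x = wsg_pmf p x) : local_LMP f.
Proof.
case: hp => [pr [p1 _]]; have p0 : forall I, 0 <= p I by move=> I; case: (pr I).
apply/lmp_iff => k hk i m n.
rewrite !(prob_wsg p1 p0 hf hfw) (Lp_shift p1) => hpos.
field; lra.
Qed.
Definition ind k (t : nat) (n : 'I_k -> nat) : 'I_k -> nat :=
  fun j => if (t < n j)%N then 1%N else 0%N.

Lemma cv_event (u : nat -> R) (c : R) N0 : (forall N, (N0 <= N)%N -> u N = c) -> Un_cv u c.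
Proof.
move=> H e he; exists N0 => N /leP hN; rewrite H // /R_dist Rminus_diag Rabs_R0; lra.
Qed.

Lemma pat_unique d (y : pt d) (I : {set 'I_d}) : pos y ->
  [forall i, if i \in I then y i == 1%N else (1 < y i)%N] = (I == [set j | y j == 1%N]).
Proof.
move=> py; apply/forallP/eqP => [H | ->].
  apply/setP => j; rewrite inE; have := H j; case: (j \in I) => [/eqP -> // | h].
  by rewrite eq_sym ltn_eqF.
move=> j; rewrite inE; case: eqP => // h; have := py j; lia.
Qed.

Lemma part_sum d (y : pt d) (Q : pred {set 'I_d}) : pos y ->
  \big[Rplus/R0]_(I : {set 'I_d}) (ib (Q I) * ib [forall i, if i \in I then y i == 1%N else (1 < y i)%N])
  = ib (Q [set j | y j == 1%N]).
Proof.
move=> py; under eq_bigr => I _ do rewrite (pat_unique I py).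
rewrite (bigD1 [set j | y j == 1%N]) //= eqxx big1 => [|I /negbTE ->]; rewrite /ib /=; ring.
Qed.

Section DirA.
Variables (d : nat) (hd : (0 < d)%N) (f : pt d -> R) (hf : is_pmf f) (hL : local_LMP f).

Let LM := proj1 (lmp_iff f) hL.

Lemma Ev_zero k (i : 'I_k -> 'I_d) n : (forall j, n j = 0%N) -> prob f (Ev i n) = 1.
Proof.
move=> H; rewrite -(prob_true hf); apply: prob_ext => // x px.
by apply/forallP => j; rewrite H.
Qed.

Lemma surv k (hk : (1 <= k <= d)%N) (i : 'I_k -> 'I_d) K : forall n, (forall j, n j <= K)%N ->
  prob f (Ev i n) = \big[Rmult/R1]_(0 <= t < K) prob f (Ev i (ind t n)).
Proof.
elim: K => [|K IH] n hn.
  rewrite big_nil; apply: Ev_zero => j; have := hn j; lia.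
case: (pickP (fun j => 0 < n j)%N) => [j0 hj0 | hnone]; last first.
  have nz : forall j, n j = 0%N by move=> j; have := hnone j; move/negbT; lia.
  rewrite Ev_zero // big1 // => t _; apply: Ev_zero => j; rewrite /ind nz //.
pose i' := fun j => if (0 < n j)%N then i j else i j0.
pose n2 := fun j => if (0 < n j)%N then n j else n j0.
pose n' := fun j => (n j).-1.
have E1 : prob f (Ev i n) = prob f (Ev i' (fun j => (n2 j).-1 + 1)%N).
  apply: prob_ext => // x px; rewrite /Ev /i' /n2; apply/forallP/forallP => H j.
    case: ifP => hj; have := H j; have := H j0; rewrite ?hj0 //; lia.
  case: (ltnP 0 (n j)) => hj; have := H j; rewrite ?hj /=.
    lia.
  move=> _; have := px (i j); lia.
have E2 : prob f (Ev i' (fun _ => 1%N)) = prob f (Ev i (ind 0 n)).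
  apply: prob_ext => // x px; rewrite /Ev /i' /ind; apply/forallP/forallP => H j.
    case: ifP => hj; have := H j; rewrite ?hj //; move=> _; exact: px.
  case: ifP => hj; have := H j; have := H j0; rewrite ?hj ?hj0 //.
have E3 : prob f (Ev i' (fun j => (n2 j).-1)) = prob f (Ev i n').
  apply: prob_ext => // x px; rewrite /Ev /i' /n2 /n'; apply/forallP/forallP => H j.
    case: (ltnP 0 (n j)) => hj; have := H j; rewrite ?hj //.
    move=> _; have := px (i j); lia.
  case: ifP => hj; have := H j; have := H j0; rewrite ?hj ?hj0 //.
have key : prob f (Ev i n) = prob f (Ev i (ind 0 n)) * prob f (Ev i n').
  have h0 := prob_ge0 hf (Ev i (ind 0 n)).
  case: (Rle_lt_or_eq_dec _ _ h0) => hpos.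
    have := @LM k hk i' 1%N (fun j => (n2 j).-1); rewrite E2 -E1 E3 => /(_ hpos) <-.
    field; lra.
  rewrite -hpos Rmult_0_l; apply: Rle_antisym; last exact: prob_ge0.
  rewrite hpos; apply: prob_mono => // x px /forallP H; apply/forallP => j.
  have := H j; rewrite /ind; case: ifP => //; lia.
rewrite key (IH n'); last by move=> j; have := hn j; rewrite /n'; lia.
rewrite big_nat_recl //; congr (_ * _); apply: eq_bigr => t _.
congr (prob f (Ev i _)); apply: functional_extensionality => j; rewrite /ind /n'.
case: ifP; case: ifP => //; lia.
Qed.
End DirA.
Section DirA2.
Variables (d : nat) (hd : (0 < d)%N) (f : pt d -> R) (hf : is_pmf f) (hL : local_LMP f).

Lemma param_gp k (i : 'I_k -> 'I_d) n t :
  prob f (Ev i (ind t n)) = gp (wsg_param_of f) i n t.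
Proof.
rewrite /gp /wsg_param_of.
under [RHS]eq_bigr => I _ do rewrite ibE Rmult_comm.
apply: prob_lin => // y py; rewrite part_sum //; congr ib.
rewrite /Ev /ind; apply: eq_forallb => j; rewrite inE.
case: ifP => _ /=; last by rewrite (py (i j)).
by have := py (i j); case: (y (i j)) => [|[|m]].
Qed.

Lemma param_sum : \big[Rplus/R0]_I wsg_param_of f I = 1.
Proof.
rewrite -(prob_true hf) /wsg_param_of.
rewrite (@prob_lin d f hf _ (fun _ => 1) (fun (I : {set 'I_d}) x => [forall i, if i \in I then x i == 1%N else (1 < x i)%N])).
  by apply: eq_bigr => I _; rewrite Rmult_1_l.
move=> y py; transitivity (ib (xpredT [set j | y j == 1%N])); first by [].
by rewrite -(part_sum xpredT py); apply: eq_bigr => I _.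
Qed.

Lemma surv_Lp k (hk : (1 <= k <= d)%N) (i : 'I_k -> 'I_d) n :
  prob f (Ev i n) = Lp (wsg_param_of f) i n.
Proof.
rewrite (@surv d hd f hf hL k hk i (\max_(j : 'I_k) n j) n); last by move=> j; exact: leq_bigmax.
rewrite /Lp; apply: eq_bigr => t _; exact: param_gp.
Qed.

Lemma prob_point (x : pt d) : pos x -> prob f (fun y => [forall j, y j == x j]) = f x.
Proof.
move=> px; eapply UL_sequence; first exact: (cv_box _ hf).
apply: (@cv_event _ _ (\max_(j : 'I_d) x j)) => N hN.
rewrite /box_sum.
under eq_bigr => z _ do rewrite (eq_forallb (fun j => eq_sym (shift z j) (x j))).
rewrite (@sing d N x f) ifT //; apply/forallP => j; rewrite px /=.
apply: leq_trans hN; exact: leq_bigmax.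
Qed.

Lemma f_wsg x : f x = wsg_pmf (wsg_param_of f) x.
Proof.
have [px | npx] := boolP [forall j, (0 < x j)%N].
  have px' : pos x by move=> j; exact: (forallP px j).
  rewrite (wsg_pmf_eq param_sum px') -(prob_point px').
  rewrite (@prob_lin d f hf _ (@sgn d) (fun phi => Ev (fun j => j) (cvec x phi))).
    apply: eq_bigr => phi _; congr (_ * _); apply: surv_Lp; by rewrite hd leqnn.
  move=> y py; exact: ie.
have [j0 hj0] : exists j, x j = 0%N.
  apply: NNPP => H; move/negP: npx; apply; apply/forallP => j; case E: (x j) => [|m] //.
  by exfalso; apply: H; exists j.
rewrite (proj1 (proj2 hf)); last by exists j0.
rewrite /wsg_pmf big1 // => w _; rewrite ifF //; apply/negP => /forallP /(_ j0).
by rewrite hj0.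
Qed.
End DirA2.
Lemma prob_compl d (f : pt d -> R) (hf : is_pmf f) (A : pt d -> bool) :
  prob f A + prob f (fun x => ~~ A x) = 1.
Proof.
rewrite -(prob_true hf).
rewrite (@prob_lin d f hf _ (fun _ => 1) (fun (b : bool) x => if b then A x else ~~ A x) xpredT).
  by rewrite big_bool /= !Rmult_1_l.
by move=> y _; rewrite big_bool /= /ib; case: (A y) => /=; ring.
Qed.

Section DirA3.
Variables (d : nat) (hd : (0 < d)%N) (f : pt d -> R) (hf : is_pmf f) (hL : local_LMP f).

Lemma param_adm : wsg_admissible (wsg_param_of f).
Proof.
split; first by move=> I; split; [exact: prob_ge0 | exact: prob_le1].
split; first exact: param_sum.
move=> k0.
pose i1 := fun _ : 'I_1 => k0.
have hk1 : (1 <= 1 <= d)%N by rewrite leqnn hd.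
set h := \big[Rplus/R0]_(I : {set 'I_d} | k0 \notin I) wsg_param_of f I.
have eh : h = prob f (Ev i1 (ind 0 (fun _ => 1%N))).
  rewrite /h big_mkcond /= (@param_gp d f hf) /gp; apply: eq_bigr => I _; congr (if _ then _ else _).
  apply/idP/forallP => [H j|H]; first by apply/implyP.
  by have := H ord0.
have hN : forall N, prob f (Ev i1 (fun _ => N)) = h ^ N.
  move=> N; rewrite (@surv d hd f hf hL 1 hk1 i1 N) => [|j]; last by [].
  rewrite (@eq_big_nat _ _ _ 0 N _ (fun _ => h)); last first.
    move=> t /andP [_ ht]; rewrite eh; congr (prob f (Ev i1 _)).
    by apply: functional_extensionality => j; rewrite /ind ht.
  rewrite big_const_nat subn0; elim: N => [|N IH] //=; rewrite IH //.
apply: Rnot_le_lt => hge.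
have h1 : h = 1.
  apply: Rle_antisym => //; rewrite eh; exact: prob_le1.
have b0 : forall N, box_sum f xpredT N <= 0.
  move=> N; have := prob_compl hf (Ev i1 (fun _ => N)); rewrite hN h1 pow1 => hc.
  have : prob f (fun x => ~~ Ev i1 (fun _ => N) x) = 0 by lra.
  move=> <-; apply: Rle_trans (prob_box hf _ N); apply: Req_le; apply: eq_bigr => z _.
  rewrite /Ev /shift /=; case: forallP => // /(_ ord0); rewrite /i1 ltnNge ltn_ord //.
have [N0 HN0] := proj2 (proj2 hf) (1/2) ltac:(lra).
have := HN0 N0 (le_n _); have := b0 N0; rewrite /R_dist => H1 H2; move: H2; split_Rabs; lra.
Qed.
End DirA3.
Theorem theorem2p2 (d : nat) (hd : (0 < d)%N) (f : pt d -> Rdefinitions.R) (hf : is_pmf f) :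
  (local_LMP f <->
     exists p : {set 'I_d} -> Rdefinitions.R, wsg_admissible p /\ forall x, f x = wsg_pmf p x)
  /\
  (local_LMP f ->
     wsg_admissible (wsg_param_of f) /\ forall x, f x = wsg_pmf (wsg_param_of f) x).
Proof.
have partA : local_LMP f ->
    wsg_admissible (wsg_param_of f) /\ forall x, f x = wsg_pmf (wsg_param_of f) x.
  move=> hL; split; first exact: (@param_adm d hd f hf hL).
  move=> x; exact: (@f_wsg d hd f hf hL x).
split => //; split.
  by move=> hL; exists (wsg_param_of f); exact: partA.
by case=> p [hp hfw]; exact: (dirB hp hf hfw).
Qed.
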